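(* Fix $a>0$ and put $A=4a^2$. For $w>0$ with $A/(2w)>a$, let $S_w=[-A/(2w),A/(2w)]\times[-w/2,w/2]$ be a rectangular city of area $A$ and width $w$, and let the tram line be the segment from $(-a,0)$ to $(a,0)$ (centred in the city, along its long axis). For $p=(x,y)\in\mathbb{R}^2$ let $\mathrm{Proj}(p)=(x^t,0)$ with $x^t=\max(-a,\min(x,a))$, define $$d_{\rm tr}(p_1,p_2)=d_{\rm euc}(p_1,\mathrm{Proj}(p_1))+d_{\rm euc}(\mathrm{Proj}(p_2),p_2),$$ with $d_{\rm euc}$ the Euclidean distance, and let $I(p)=\{q: d_{\rm euc}(p,q)<d_{\rm tr}(p,q)\}$. Let $$F(w)=\frac{1}{A}\iint_{S_w}\frac{\operatorname{area}(I(p)\cap S_w)}{A}\,dp$$ be the average infeasible fraction of the city. Then $\lim_{w\to 0^+}F(w)=\tfrac12$; i.e. as the rectangular city becomes arbitrarily long and narrow at constant area, its Infeasibility Factor tends to $50\%$.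
   Context: The model: a city occupies a planar region with uniform population density; a single straight tram line runs along a segment. The tram distance $d_{\rm tr}$ corresponds to the idealized case of infinite tram speed and zero waiting time: a traveller walks from the departure point to the nearest point of the tram line, rides the tram (at no cost) to the point of the line nearest the destination, and walks to the destination. A journey from $p$ to $q$ is infeasible if the direct Euclidean distance is strictly smaller than the tram distance. The Infeasibility Factor of a city $S$ is the average over $p\in S$ (with respect to area) of $100\cdot\operatorname{area}(I(p)\cap S)/\operatorname{area}(S)$. *)

(* Defs.v *)
From HB Require Import structures.
From mathcomp Require Import all_boot all_order all_algebra.
From mathcomp Require Import all_classical all_reals all_analysis.
Set Implicit Arguments. Unset Strict Implicit. Unset Printing Implicit Defensive.
Import Order.TTheory GRing.Theory Num.Theory.
Import numFieldNormedType.Exports.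
Local Open Scope classical_set_scope.
Local Open Scope ring_scope.

Section tram.
Variable R : realType.

Definition deuc (p q : R * R) : R :=
  Num.sqrt ((p.1 - q.1) ^+ 2 + (p.2 - q.2) ^+ 2).

Definition proj_tram (a : R) (p : R * R) : R * R :=
  (Num.max (- a) (Num.min p.1 a), 0).

Definition dtr (a : R) (p1 p2 : R * R) : R :=
  deuc p1 (proj_tram a p1) + deuc (proj_tram a p2) p2.

Definition Infeas (a : R) (p : R * R) : set (R * R) :=
  [set q | deuc p q < dtr a p q].

Definition city_area (a : R) : R := 4 * a ^+ 2.

Definition city (a w : R) : set (R * R) :=
  `[- (city_area a / (2 * w)), city_area a / (2 * w)]%classic
  `*` `[- (w / 2), w / 2]%classic.

Definition area : set (R * R) -> \bar R :=
  (@lebesgue_measure R \x @lebesgue_measure R)%E.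

Definition Ffrac (a w : R) : R :=
  fine (\int[area]_(p in city a w)
          (area (Infeas a p `&` city a w) * ((city_area a)^-1)%:E))%E
  / city_area a.

End tram.

(* Main.v *)
Require Import Defs.
From HB Require Import structures.
From mathcomp Require Import all_boot all_order all_algebra.
From mathcomp Require Import all_classical all_reals all_analysis.
From mathcomp Require Import ring lra.
Import Order.TTheory GRing.Theory Num.Theory.
Import numFieldNormedType.Exports.
Local Open Scope classical_set_scope.
Local Open Scope ring_scope.

Section geom.
Variable R : realType.
Implicit Types (a w s t : R) (p q : R * R).

Lemma sqrt_ge_abs s t : `|s| <= Num.sqrt (s ^+ 2 + t ^+ 2).
Proof.
rewrite -sqrtr_sqr ler_sqrt; last by rewrite addr_ge0 // sqr_ge0.
by rewrite lerDl sqr_ge0.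
Qed.

Lemma sqrt_le_abs s t : Num.sqrt (s ^+ 2 + t ^+ 2) <= `|s| + `|t|.
Proof.
rewrite -[X in _ <= X]ger0_norm ?addr_ge0 // -sqrtr_sqr ler_sqrt ?sqr_ge0 //.
rewrite sqrrD -[s ^+ 2]real_normK ?num_real // -[t ^+ 2]real_normK ?num_real //.
rewrite lerD2r lerDl; apply: mulrn_wge0; exact: mulr_ge0.
Qed.

Lemma deucC p q : deuc p q = deuc q p.
Proof. by rewrite /deuc -sqrrN opprB -[(p.2 - q.2)^+2]sqrrN opprB. Qed.

Lemma proj_right a p : 0 < a -> a <= p.1 -> proj_tram a p = (a, 0).
Proof.
move=> a0 ap; rewrite /proj_tram; congr pair.
rewrite (_ : Num.min p.1 a = a); last by apply/min_idPr.
by apply/max_idPr; lra.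
Qed.

Lemma proj_left a p : 0 < a -> p.1 <= - a -> proj_tram a p = (- a, 0).
Proof.
move=> a0 ap; rewrite /proj_tram; congr pair.
rewrite (_ : Num.min p.1 a = p.1); last by apply/min_idPl; lra.
by apply/max_idPl.
Qed.


Lemma infeas_right a w p q : 0 < a -> 0 < w -> a + w <= p.1 -> a + w <= q.1 ->
  - (w / 2) <= p.2 <= w / 2 -> - (w / 2) <= q.2 <= w / 2 -> Infeas a p q.
Proof.
move=> a0 w0 hp hq /andP[hp1 hp2] /andP[hq1 hq2].
rewrite /Infeas /= /dtr !proj_right //; try lra.
have e1 := sqrt_ge_abs (p.1 - (a, 0 : R).1) (p.2 - (a, 0 : R).2).
have e2 := sqrt_ge_abs ((a, 0 : R).1 - q.1) ((a, 0 : R).2 - q.2).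
have e3 := sqrt_le_abs (p.1 - q.1) (p.2 - q.2).
rewrite /deuc; move: e1 e2 e3 => /=.
rewrite (ger0_norm (x := p.1 - a)); last lra.
rewrite (ler0_norm (x := a - q.1)); last lra.
have : `|p.2 - q.2| <= w by rewrite ler_norml; apply/andP; split; lra.
have [hx|hx] := lerP 0 (p.1 - q.1).
  rewrite (ger0_norm hx); lra.
rewrite (ltr0_norm hx); lra.
Qed.

Lemma infeas_left a w p q : 0 < a -> 0 < w -> p.1 <= - (a + w) -> q.1 <= - (a + w) ->
  - (w / 2) <= p.2 <= w / 2 -> - (w / 2) <= q.2 <= w / 2 -> Infeas a p q.
Proof.
move=> a0 w0 hp hq /andP[hp1 hp2] /andP[hq1 hq2].
rewrite /Infeas /= /dtr !proj_left //; try lra.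
have e1 := sqrt_ge_abs (p.1 - (- a, 0 : R).1) (p.2 - (- a, 0 : R).2).
have e2 := sqrt_ge_abs ((- a, 0 : R).1 - q.1) ((- a, 0 : R).2 - q.2).
have e3 := sqrt_le_abs (p.1 - q.1) (p.2 - q.2).
rewrite /deuc; move: e1 e2 e3 => /=.
rewrite (ler0_norm (x := p.1 - - a)); last lra.
rewrite (ger0_norm (x := - a - q.1)); last lra.
have : `|p.2 - q.2| <= w by rewrite ler_norml; apply/andP; split; lra.
have [hx|hx] := lerP 0 (p.1 - q.1).
  rewrite (ger0_norm hx); lra.
rewrite (ltr0_norm hx); lra.
Qed.

Lemma feas a w p q : 0 < a -> w <= 2 * a -> a <= p.1 -> q.1 <= - a ->
  - (w / 2) <= p.2 <= w / 2 -> - (w / 2) <= q.2 <= w / 2 -> ~ Infeas a p q.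
Proof.
move=> a0 wa hp hq /andP[hp1 hp2] /andP[hq1 hq2].
rewrite /Infeas /= /dtr proj_right // proj_left //.
have e1 := sqrt_le_abs (p.1 - (a, 0 : R).1) (p.2 - (a, 0 : R).2).
have e2 := sqrt_le_abs ((- a, 0 : R).1 - q.1) ((- a, 0 : R).2 - q.2).
have e3 := sqrt_ge_abs (p.1 - q.1) (p.2 - q.2).
rewrite /deuc; move: e1 e2 e3 => /=.
rewrite (ger0_norm (x := p.1 - a)); last lra.
rewrite (ger0_norm (x := - a - q.1)); last lra.
rewrite (ger0_norm (x := p.1 - q.1)); last lra.
have : `|p.2 - 0| <= w / 2 by rewrite subr0 ler_norml; apply/andP; split; lra.
have : `|0 - q.2| <= w / 2 by rewrite sub0r normrN ler_norml; apply/andP; split; lra.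
move=> *; apply/negP; rewrite -leNgt; lra.
Qed.

Lemma feas' a w p q : 0 < a -> w <= 2 * a -> p.1 <= - a -> a <= q.1 ->
  - (w / 2) <= p.2 <= w / 2 -> - (w / 2) <= q.2 <= w / 2 -> ~ Infeas a p q.
Proof.
move=> a0 wa hp hq hp2 hq2; have := @feas a w q p a0 wa hq hp hq2 hp2.
rewrite /Infeas /= /dtr deucC [deuc _ (proj_tram a p)]deucC [deuc (proj_tram a q) q]deucC addrC.
by [].
Qed.


Lemma mdeuc p : measurable_fun setT (deuc p).
Proof.
apply: (measurableT_comp (measurable_realfun.continuous_measurable_fun (@sqrt_continuous R))).
apply: measurable_realfun.measurable_funD; apply: measurable_realfun.measurable_funX; apply: measurable_realfun.measurable_funB => //.
all: first [exact: measurable_fst | exact: measurable_snd].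
Qed.

Lemma mproj a : measurable_fun setT (fun q : R * R => Num.max (- a) (Num.min q.1 a)).
Proof.
apply: measurable_realfun.measurable_maxr => //; apply: measurable_realfun.measurable_minr => //; exact: measurable_fst.
Qed.

Lemma mdeuc2 a : measurable_fun setT (fun q : R * R => deuc (proj_tram a q) q).
Proof.
rewrite /deuc /proj_tram /=.
apply: (measurableT_comp (measurable_realfun.continuous_measurable_fun (@sqrt_continuous R))).
apply: measurable_realfun.measurable_funD; apply: measurable_realfun.measurable_funX; apply: measurable_realfun.measurable_funB => //.
all: first [exact: measurable_fst | exact: measurable_snd | exact: mproj].
Qed.

Lemma mInfeas a p : measurable (Infeas a p).
Proof.
have := @measurable_realfun.measurable_fun_ltr _ _ R setT (deuc p) (dtr a p) (mdeuc p).
move=> /(_ _) H.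
have mf : measurable_fun setT (dtr a p).
  by apply: measurable_realfun.measurable_funD => //; exact: mdeuc2.
have := H mf measurableT [set true] I.
by rewrite setTI.
Qed.


Lemma leb_itv (b1 b2 : bool) (x1 x2 : R) : x1 <= x2 ->
  (@lebesgue_measure R [set` Interval (BSide b1 x1) (BSide b2 x2)] = (x2 - x1)%:E)%E.
Proof.
move=> hx; rewrite lebesgue_measure_itv /= lte_fin.
have [lt|ge] := ltP x1 x2; first by rewrite EFinB.
have -> : x2 = x1 by apply/eqP; rewrite eq_le hx ge.
by rewrite subrr.
Qed.

Lemma area_rect (b1 b2 b3 b4 : bool) (x1 x2 y1 y2 : R) : x1 <= x2 -> y1 <= y2 ->
  area ([set` Interval (BSide b1 x1) (BSide b2 x2)] `*` [set` Interval (BSide b3 y1) (BSide b4 y2)])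
  = ((x2 - x1) * (y2 - y1))%:E.
Proof.
move=> hx hy; rewrite /area product_measure1E //; try exact: measurable_itv.
transitivity ((x2 - x1)%:E * (y2 - y1)%:E)%E; last by rewrite EFinM.
by congr (_ * _)%E; exact: leb_itv.
Qed.


Lemma le_int_gen d (T : measurableType d) (mu : {measure set T -> \bar R}) (D : set T)
  (f g : T -> \bar R) : (forall x, D x -> (0 <= f x)%E) ->
  (forall x, D x -> (f x <= g x)%E) ->
  (\int[mu]_(x in D) f x <= \int[mu]_(x in D) g x)%E.
Proof.
move=> f0 fg; rewrite ge0_integralE // ge0_integralE /=; last first.
  by move=> x Dx; apply: le_trans (fg x Dx); exact: f0.
apply: ereal_sup_le => _ [h hle <-]; exists h => // x; apply: le_trans (hle x) _.
rewrite /patch; case: ifP => // /[1!inE] Dx; exact: fg.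
Qed.

End geom.

Section inst.
Variable R : realType.
Let area0 : @area R set0 = 0%E.
Proof. exact: measure0. Qed.
Let area_ge0 (X : set (R * R)) : (0 <= @area R X)%E.
Proof. exact: measure_ge0. Qed.
Let area_sa : semi_sigma_additive (@area R).
Proof. exact: (@measure_semi_sigma_additive _ _ _ (@lebesgue_measure R \x @lebesgue_measure R)%E). Qed.
HB.instance Definition _ := isMeasure.Build _ (R * R)%type R (@area R) area0 area_ge0 area_sa.
End inst.

Lemma arith (R : realType) (a w r s : R) : 0 < a -> 0 < w -> w < a ->
  s = 2 * a ^+ 2 - a * w - w ^+ 2 ->
  2 * s ^+ 2 / (4 * a ^+ 2) <= r -> r <= 2 * a ^+ 2 + 3 * a * w ->
  `|r / (4 * a ^+ 2) - 1 / 2| <= w / a.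
Proof.
move=> a0 w0 wa sd lo up.
have a2 : 0 < 4 * a ^+ 2 by apply: mulr_gt0 => //; exact: exprn_gt0.
rewrite ler_norml; apply/andP; split.
  have e : r / (4 * a ^+ 2) - 1 / 2 + w / a = (r - (2 * a ^+ 2 - 4 * a * w)) / (4 * a ^+ 2).
    by field; rewrite gt_eqF.
  have e2 : 2 * s ^+ 2 / (4 * a ^+ 2) - (2 * a ^+ 2 - 4 * a * w)
      = (2 * s ^+ 2 - 4 * a ^+ 2 * (2 * a ^+ 2 - 4 * a * w)) / (4 * a ^+ 2).
    by field; rewrite gt_eqF.
  have h1 : 0 <= 2 * s ^+ 2 - 4 * a ^+ 2 * (2 * a ^+ 2 - 4 * a * w).
    have s1 : 2 * a ^+ 2 - 2 * a * w <= s by rewrite sd; nra.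
    have s0 : 0 <= 2 * a ^+ 2 - 2 * a * w by nra.
    have : (2 * a ^+ 2 - 2 * a * w) ^+ 2 <= s ^+ 2.
      by rewrite ler_pXn2r // ?nnegrE //; apply: le_trans s1.
    nra.
  have h2 : 0 <= 2 * s ^+ 2 / (4 * a ^+ 2) - (2 * a ^+ 2 - 4 * a * w).
    by rewrite e2 divr_ge0 // ltW.
  have h3 : 0 <= r / (4 * a ^+ 2) - 1 / 2 + w / a.
    by rewrite e divr_ge0 ?(ltW a2) //; lra.
  lra.
have e : r / (4 * a ^+ 2) - 1 / 2 - w / a = (r - (2 * a ^+ 2 + 4 * a * w)) / (4 * a ^+ 2).
  by field; rewrite gt_eqF.
have : r / (4 * a ^+ 2) - 1 / 2 - w / a <= 0.
  rewrite e; apply: mulr_le0_ge0; last by rewrite invr_ge0 ltW.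
  nra.
lra.
Qed.

Ltac cb := repeat match goal with x := _ |- _ => clearbody x end.

Section main.
Variables (R : realType) (a w : R).
Hypotheses (a0 : 0 < a) (w0 : 0 < w) (wa : w < a).

Let A := city_area a.
Let h := A / (2 * w).
Let V : set R := `[- (w / 2), w / 2]%classic.
Let S := city a w.

Let A0 : 0 < A. Proof. by rewrite /A /city_area; apply: mulr_gt0 => //; exact: exprn_gt0. Qed.
Let hw : h * w = 2 * a ^+ 2.
Proof. rewrite /h /A /city_area; field; by rewrite gt_eqF. Qed.
Let h2a : 2 * a < h.
Proof. have := hw; have : 0 < a * (a - w) by apply: mulr_gt0; [exact: a0| rewrite subr_gt0].
clearbody h.
move=> H1 H2; rewrite ltNge; apply/negP => H.
have : 0 <= (2 * a - h) * w. apply: mulr_ge0. rewrite subr_ge0 //. exact: ltW. nra. Qed.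

Ltac lra' := cb; have := a0; have := w0; have := wa; have := h2a; move=> ? ? ? ?; lra.

Let inS p : S p <-> (- h <= p.1 <= h) /\ (- (w / 2) <= p.2 <= w / 2).
Proof. by rewrite /S /city /= !in_itv. Qed.

Let mS : measurable S.
Proof. apply: measurableX; exact: measurable_itv. Qed.

Let mIS p : measurable (Infeas a p `&` S).
Proof. apply: measurableI; [exact: mInfeas | exact: mS]. Qed.

Let R1 := `[a + w, h]%classic `*` V.
Let R2 := `[- h, - (a + w)]%classic `*` V.
Let c' := (h - (a + w)) * w / A.

Let f p := (area (Infeas a p `&` S) * (A^-1)%:E)%E.
Let g p := (c' * \1_(R1 `|` R2) p)%:E.

Let mR1 : measurable R1. Proof. apply: measurableX; exact: measurable_itv. Qed.
Let mR2 : measurable R2. Proof. apply: measurableX; exact: measurable_itv. Qed.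

Let f0 p : (0 <= f p)%E.
Proof. by apply: mule_ge0 => //; rewrite lee_fin invr_ge0 ltW. Qed.

Let aR1 : area R1 = ((h - (a + w)) * w)%:E.
Proof. rewrite /R1 /V area_rect; [congr EFin; congr (_ * _); lra' | lra' | lra']. Qed.
Let aR2 : area R2 = ((h - (a + w)) * w)%:E.
Proof. rewrite /R2 /V area_rect; [congr EFin; congr (_ * _); lra' | lra' | lra']. Qed.

Let low_pt p : S p -> (g p <= f p)%E.
Proof.
move=> /inS [/andP[p1 p2] /andP[p3 p4]].
rewrite /g indicE; case: (boolP (p \in R1 `|` R2)); last by rewrite mulr0.
move=> /set_mem [Hp|Hp]; rewrite mulr1.
- have -> : c'%:E = (area R1 * (A^-1)%:E)%E by rewrite aR1 /c'.
  apply: lee_wpmul2r; first by rewrite lee_fin invr_ge0 ltW.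
  apply: le_measure; [rewrite inE; exact: mR1 | rewrite inE; exact: mIS |].
  move=> q [/=]; rewrite !in_itv /= => /andP[q1 q2] /andP[q3 q4]; split.
    case: Hp => /=; rewrite !in_itv /= => /andP[? ?] /andP[? ?].
    apply: (@infeas_right _ a w) => //; apply/andP; split => //.
  by apply/inS; split; apply/andP; split => //; lra'.
- have -> : c'%:E = (area R2 * (A^-1)%:E)%E by rewrite aR2 /c'.
  apply: lee_wpmul2r; first by rewrite lee_fin invr_ge0 ltW.
  apply: le_measure; [rewrite inE; exact: mR2 | rewrite inE; exact: mIS |].
  move=> q [/=]; rewrite !in_itv /= => /andP[q1 q2] /andP[q3 q4]; split.
    case: Hp => /=; rewrite !in_itv /= => /andP[? ?] /andP[? ?].
    apply: (@infeas_left _ a w) => //; apply/andP; split => //.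
  by apply/inS; split; apply/andP; split => //; lra'.
Qed.

Let T := `[- a, a]%classic `*` V.
Let Q1 := `]- a, h]%classic `*` V.
Let Q2 := `[- h, a[%classic `*` V.
Let c := (h + a) * w / A.
Let u p := (c + \1_T p)%:E.

Let mT : measurable T. Proof. apply: measurableX; exact: measurable_itv. Qed.
Let mQ1 : measurable Q1. Proof. apply: measurableX; exact: measurable_itv. Qed.
Let mQ2 : measurable Q2. Proof. apply: measurableX; exact: measurable_itv. Qed.

Let aQ1 : area Q1 = ((h + a) * w)%:E.
Proof. rewrite /Q1 /V area_rect; [congr EFin; congr (_ * _); lra' | lra' | lra']. Qed.
Let aQ2 : area Q2 = ((h + a) * w)%:E.
Proof. rewrite /Q2 /V area_rect; [congr EFin; congr (_ * _); lra' | lra' | lra']. Qed.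
Let aS : area S = A%:E.
Proof.
have := @area_rect R true false true false (- h) h (- (w / 2)) (w / 2).
rewrite /S /city -/h => ->; [congr EFin | lra' | lra'].
have := hw; rewrite /A /city_area; cb => hw'; rewrite !opprK -splitr; nra.
Qed.
Let aT : area T = (2 * a * w)%:E.
Proof. rewrite /T /V area_rect; [congr EFin; lra' | lra' | lra']. Qed.

Let c0 : 0 <= c.
Proof. rewrite /c; apply: divr_ge0; [apply: mulr_ge0; lra' | exact: ltW]. Qed.

Let up_pt p : S p -> (f p <= u p)%E.
Proof.
move=> /inS [/andP[p1 p2] /andP[p3 p4]].
rewrite /u /f.
have Ainv : (0 <= (A^-1)%:E)%E by rewrite lee_fin invr_ge0 ltW.
have [pl|pl] := ltP a p.1.
  rewrite indicE (_ : p \in T = false); last first.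
    apply/negbTE/negP => /set_mem; rewrite /T => -[] /=; rewrite in_itv /= => /andP[_ ?]; lra'.
  rewrite addr0 (_ : c%:E = (area Q1 * (A^-1)%:E)%E); last by rewrite aQ1.
  apply: lee_wpmul2r => //.
  apply: le_measure; [rewrite inE; exact: mIS | rewrite inE; exact: mQ1 |].
  move=> q [Iq /inS [/andP[q1 q2] /andP[q3 q4]]]; split => /=; idtac.
    apply/andP; split; rewrite bnd_simp //; rewrite ltNge; apply/negP => qa.
    apply: (@feas _ a w p q) => //; [lra' | lra' | by apply/andP | by apply/andP].
  by apply/andP.
have [pr|pr] := ltP p.1 (- a).
  rewrite indicE (_ : p \in T = false); last first.
    apply/negbTE/negP => /set_mem; rewrite /T => -[] /=; rewrite in_itv /= => /andP[? _]; lra'.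
  rewrite addr0 (_ : c%:E = (area Q2 * (A^-1)%:E)%E); last by rewrite aQ2.
  apply: lee_wpmul2r => //.
  apply: le_measure; [rewrite inE; exact: mIS | rewrite inE; exact: mQ2 |].
  move=> q [Iq /inS [/andP[q1 q2] /andP[q3 q4]]]; split => /=.
    apply/andP; split; rewrite bnd_simp //; rewrite ltNge; apply/negP => qa.
    apply: (@feas' _ a w p q) => //; [lra' | lra' | by apply/andP | by apply/andP].
  by apply/andP.
rewrite indicE (_ : p \in T = true); last first.
  by apply/mem_set; split => /=; rewrite ?/V /=; apply/andP; split; rewrite bnd_simp.
rewrite mulr1n EFinD; apply: le_trans (_ : 1%:E <= _)%E; last first.
  by rewrite leeDr // lee_fin.
rewrite (_ : 1%:E = (area S * (A^-1)%:E)%E); last by rewrite aS -EFinM mulfV // gt_eqF.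
apply: lee_wpmul2r => //.
apply: le_measure; [rewrite inE; exact: mIS | rewrite inE; exact: mS |].
by move=> q [].
Qed.


Let c'0 : 0 <= c'.
Proof. rewrite /c'; apply: divr_ge0; [apply: mulr_ge0; lra' | exact: ltW]. Qed.

Let int_g : (\int[@area R]_(p in S) g p = (c' * (2 * ((h - (a + w)) * w)))%:E)%E.
Proof.
have mU : measurable (R1 `|` R2) by exact: measurableU.
have Hs : R1 `|` R2 `<=` S.
  move=> q [] [] /=; rewrite ?/V => /andP[q1 q2] /andP[q3 q4]; apply/inS;
    rewrite ?bnd_simp in q1 q2 q3 q4 *; split; apply/andP; split; lra'.
have Hd : R1 `&` R2 = set0.
  apply/seteqP; split => // q [[/= /andP[q1 q2] _] [/= /andP[q3 q4] _]].
  rewrite ?bnd_simp in q1 q2 q3 q4; lra'.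
rewrite /g (@integralZl_indic _ _ _ _ _ mS (fun _ => R1 `|` R2) c') //=; last first.
  by move=> /lt_geF; rewrite c'0.
rewrite integral_indic // setIidl // measureU //.
transitivity (c'%:E * (((h - (a + w)) * w)%:E + ((h - (a + w)) * w)%:E))%E.
  by congr (_ * (_ + _))%E; [exact: aR1 | exact: aR2].
by rewrite -EFinD -EFinM; congr EFin; lra'. 
Qed.


Let int_u : (\int[@area R]_(p in S) u p = (c * A + 2 * a * w)%:E)%E.
Proof.
have TS : T `<=` S.
  move=> q [] /=; rewrite ?/V => /andP[q1 q2] /andP[q3 q4]; apply/inS;
    rewrite ?bnd_simp in q1 q2 q3 q4 *; split; apply/andP; split; lra'.
rewrite /u.
under eq_integral => p _ do rewrite EFinD.
rewrite ge0_integralD //; last first.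
all: try (by move=> x _; rewrite lee_fin).
all: try (by apply/measurable_realfun.measurable_EFinP;
  exact: measurable_realfun.measurable_indic).
rewrite integral_cst // integral_indic // setIidl //.
transitivity (c%:E * A%:E + (2 * a * w)%:E)%E.
  by congr (_ * _ + _)%E; [exact: aS | exact: aT].
by rewrite -EFinM -EFinD.
Qed.

Lemma Fbound : `|Ffrac a w - 1 / 2| <= w / a.
Proof.
have lo_le : ((c' * (2 * ((h - (a + w)) * w)))%:E <= \int[@area R]_(p in S) f p)%E.
  rewrite -int_g; apply: le_int_gen.
  - by move=> x _; rewrite /g lee_fin mulr_ge0 // indicE ler0n.
  - by move=> x Sx; exact: low_pt.
have le_up : (\int[@area R]_(p in S) f p <= (c * A + 2 * a * w)%:E)%E.
  rewrite -int_u; apply: le_int_gen => // x Sx; exact: up_pt.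
change (`|fine (\int[@area R]_(p in S) f p)%E / A - 1 / 2| <= w / a).
move: lo_le le_up; case: (\int[@area R]_(p in S) f p)%E => [r| |] //=.
rewrite !lee_fin => lo up.
have sd : (h - (a + w)) * w = 2 * a ^+ 2 - a * w - w ^+ 2.
  by rewrite mulrBl hw; ring.
rewrite /A /city_area; apply: (@arith R a w r ((h - (a + w)) * w)) => //.
  apply: le_trans lo; rewrite le_eqVlt; apply/orP; left; apply/eqP.
  rewrite /c' /A /city_area; field; by rewrite gt_eqF.
apply: le_trans up _; rewrite le_eqVlt; apply/orP; left; apply/eqP.
rewrite /c /A /city_area (_ : (h + a) * w = 2 * a ^+ 2 + a * w); last by rewrite mulrDl hw.
field; by rewrite gt_eqF.
Qed.

End main.

Theorem mainTheorem2 (R : realType) (a : R) (ha : 0 < a) :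
  Ffrac a w @[w --> 0^'+] --> (1 / 2 : R).
Proof.
apply/cvgrPdist_le => e e0.
near=> t.
have t0 : 0 < t by near: t; exact: nbhs_right_gt.
have ta : t < a by near: t; exact: nbhs_right_lt.
have te : t < e * a by near: t; apply: nbhs_right_lt; exact: mulr_gt0.
rewrite distrC; apply: le_trans (@Fbound R a t ha t0 ta) _.
by rewrite ler_pdivrMr // ltW.
Unshelve. all: by end_near.
Qed.
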